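(* Let $X$ be a locally convex space, let $T:X\rightrightarrows X^{*}$, and let $\mathcal{V}$ be a class of algebraically open subsets of $X$ with $X\in\mathcal{V}$. Then $T\in\mathcal{M}(X)$ and $T$ is identified by every $V\in\mathcal{V}$ if and only if $T$ is representable and $T$ is $V$-NI for every $V\in\mathcal{V}$.
   Context: $(X,\tau)$ is a non-trivial Hausdorff locally convex space, $X^*$ its dual with weak-star topology $\omega^*$, $Z=X\times X^*$ with topology $\tau\times\omega^*$, $c(x,x^* )=\langle x,x^*\rangle$. Operators are identified with their graphs; $D(T)$ is the domain; $T|_V$ has graph $\operatorname{Graph}T\cap(V\times X^* )$. $\varphi_{T}(x,x^{*})=\sup\{\langle x,u^{*}\rangle+\langle u,x^{*}\rangle-\langle u,u^{*}\rangle\mid(u,u^{*})\in T\}$ ($\sup\emptyset=-\infty$). $\mathcal M(X)$: monotone operators with non-empty graph. $T$ is representable if there is a proper convex $\tau\times\omega^*$-lsc $h:Z\to\overline{\mathbb R}$ with $h\ge c$ and $\{h=c\}=\operatorname{Graph}T$. $V$ identifies $T$ if $\{z\in V\times X^*\mid\varphi_{T|_V}(z)\le c(z)\}\subset\operatorname{Graph}T$; $T$ is $V$-NI if $\varphi_{T|_V}\ge c$ on $V\times X^*$. Algebraically open: equal to its core. *)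

(* Defs.v *)
From HB Require Import structures.
From mathcomp Require Import all_boot all_order all_algebra.
From mathcomp Require Import all_classical all_reals all_analysis.
Set Implicit Arguments. Unset Strict Implicit. Unset Printing Implicit Defensive.
Import Order.TTheory GRing.Theory Num.Theory.
Import numFieldTopology.Exports.
Local Open Scope classical_set_scope.
Local Open Scope ring_scope.

Section Defs.
Context (R : realType) (X : tvsType R).

Record dual := Dual {
  dual_fun :> X -> R;
  dual_linear : forall (a : R) (x y : X),
      dual_fun (a *: x + y) = a * dual_fun x + dual_fun y;
  dual_cont : continuous dual_fun }.

(** Z = X x X^* ; operators are identified with their graphs. *)
Definition Z := (X * dual)%type.

Definition coupling (z : Z) : R := z.2 z.1.

(** Openness / closedness in the product topology tau x omega^* on Z
    (omega^* = weak-star topology on X^*, whose basic neighbourhoods are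
    given by finitely many evaluation points and a radius). *)
Definition Zopen (A : set Z) : Prop :=
  forall z, A z -> exists N : set X, nbhs z.1 N /\
    exists s : seq X, exists2 e : R, 0 < e &
      forall (y : X) (y' : dual), N y ->
        (forall u, u \in s -> `|y' u - z.2 u| < e) -> A (y, y').
Definition Zclosed (A : set Z) : Prop := Zopen (~` A).

Definition proper_fun (h : Z -> \bar R) : Prop :=
  (forall z, h z != -oo%E) /\ exists z, h z \is a fin_num.

Definition convex_fun (h : Z -> \bar R) : Prop :=
  forall (z1 z2 z : Z) (t : R), 0 < t < 1 ->
    z.1 = t *: z1.1 + (1 - t) *: z2.1 ->
    (forall u, z.2 u = t * z1.2 u + (1 - t) * z2.2 u) ->
    (h z <= t%:E * h z1 + (1 - t)%:E * h z2)%E.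

Definition lsc_fun (h : Z -> \bar R) : Prop :=
  forall r : R, Zclosed [set z | (h z <= r%:E)%E].

Definition phiT (T : set Z) (z : Z) : \bar R :=
  ereal_sup [set ((z.2 u.1 + u.2 z.1 - u.2 u.1)%:E) | u in T].

Definition restr (T : set Z) (V : set X) : set Z := [set z | T z /\ V z.1].

Definition monotone_op (T : set Z) : Prop :=
  forall z w, T z -> T w -> 0 <= z.2 (z.1 - w.1) - w.2 (z.1 - w.1).

Definition in_MX (T : set Z) : Prop := monotone_op T /\ T !=set0.

Definition representable (T : set Z) : Prop :=
  exists h : Z -> \bar R, [/\ proper_fun h, convex_fun h, lsc_fun h,
    (forall z, (coupling z)%:E <= h z)%E &
    [set z | h z = (coupling z)%:E] = T].

Definition identifies (V : set X) (T : set Z) : Prop :=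
  forall z : Z, V z.1 -> (phiT (restr T V) z <= (coupling z)%:E)%E -> T z.

Definition V_NI (V : set X) (T : set Z) : Prop :=
  forall z : Z, V z.1 -> ((coupling z)%:E <= phiT (restr T V) z)%E.

Definition core (A : set X) : set X :=
  [set x | forall d : X, exists2 delta : R, 0 < delta &
     forall t : R, 0 <= t <= delta -> A (x + t *: d)].

Definition alg_open (A : set X) : Prop := A = core A.

End Defs.

(* Main.v *)
Require Import Defs.
From HB Require Import structures.
From mathcomp Require Import all_boot all_order all_algebra.
From mathcomp Require Import all_classical all_reals all_analysis.
From mathcomp Require Import ring lra.
Import Order.TTheory GRing.Theory Num.Theory.
Local Open Scope classical_set_scope.
Local Open Scope ring_scope.

Module Helpers.
Set Implicit Arguments. Unset Strict Implicit. Unset Printing Implicit Defensive.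
Import numFieldTopology.Exports.
Section HahnBanach.
Context (R : realType).

Lemma inf_scale (S : set R) (k : R) : 0 < k -> S !=set0 -> has_lbound S ->
  inf [set k * s | s in S] = k * inf S.
Proof.
move=> k0 S0 Slb.
have kS0 : [set k * s | s in S] !=set0.
  by case: S0 => s Ss; exists (k * s); exists s.
have kSlb : has_lbound [set k * s | s in S].
  case: Slb => m hm; exists (k * m) => _ [s Ss <-].
  by rewrite ler_pM2l //; apply: hm.
apply/eqP; rewrite eq_le; apply/andP; split.
- rewrite -ler_pdivrMl //.
  apply: lb_le_inf => // s Ss.
  rewrite ler_pdivrMl //.
  by apply: ge_inf => //; exists s.
- apply: lb_le_inf => // _ [s Ss <-].
  by rewrite ler_pM2l //; apply: ge_inf.
Qed.

Context (E : lmodType R).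

Definition sublin (p : E -> R) :=
  (forall x y, p (x + y) <= p x + p y) /\
  (forall (k : R) x, 0 < k -> p (k *: x) = k * p x).

Lemma sublin0 p : sublin p -> p 0 = 0.
Proof.
case=> _ hom; have := hom 2 0 (ltr0Sn _ 1); rewrite scaler0 => h; lra.
Qed.

Lemma sublin_hom p : sublin p -> forall (k : R) x, 0 <= k -> p (k *: x) = k * p x.
Proof.
move=> sp k x; rewrite le_eqVlt => /orP[/eqP <-|]; last by apply: sp.2.
by rewrite scale0r mul0r sublin0.
Qed.

Lemma sublin_lb p : sublin p -> forall x, - p (- x) <= p x.
Proof.
move=> sp x; have := sp.1 x (- x); rewrite subrr sublin0 //; lra.
Qed.

Section Dir.
Variables (p : E -> R) (y : E).
Hypothesis sp : sublin p.

Definition dset x := [set p (x + t *: y) - t * p y | t in [set t : R | 0 <= t]].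
Definition dirp x := inf (dset x).

Lemma dset0 x : dset x !=set0.
Proof. by exists (p (x + 0 *: y) - 0 * p y); exists 0 => //=. Qed.

Lemma dset_lb x : has_lbound (dset x).
Proof.
exists (- p (- x)) => _ [t /= t0 <-].
have h := sp.1 (x + t *: y) (- x).
rewrite addrC addKr (sublin_hom sp) // in h; lra.
Qed.

Lemma dirp_le x : dirp x <= p x.
Proof.
have -> : p x = p (x + 0 *: y) - 0 * p y by rewrite scale0r addr0 mul0r subr0.
by rewrite /dirp; apply: ge_inf; [exact: dset_lb | exists 0 => //=].
Qed.

Lemma dirp_opp : dirp (- y) <= - p y.
Proof.
have -> : - p y = p (- y + 1 *: y) - 1 * p y by rewrite scale1r addNr sublin0 // mul1r sub0r.
by rewrite /dirp; apply: ge_inf; [exact: dset_lb | exists 1 => //=; rewrite ler01].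
Qed.

Lemma dirp_sublin : sublin dirp.
Proof.
split.
- move=> x1 x2; rewrite /dirp -inf_sumE; last 2 first.
  + split; [exact: dset0 | exact: dset_lb].
  + split; [exact: dset0 | exact: dset_lb].
  apply: lb_le_inf.
    case: (dset0 x1) => a1 h1; case: (dset0 x2) => a2 h2.
    by exists (a1 + a2); exists a1 => //; exists a2.
  move=> _ [_ [t1 /= t10 <-] [_ [t2 /= t20 <-] <-]].
  have : dset (x1 + x2) (p (x1 + x2 + (t1 + t2) *: y) - (t1 + t2) * p y).
    by exists (t1 + t2) => //=; rewrite addr_ge0.
  move/(ge_inf (dset_lb _)) => h.
  have := sp.1 (x1 + t1 *: y) (x2 + t2 *: y).
  have -> : x1 + t1 *: y + (x2 + t2 *: y) = x1 + x2 + (t1 + t2) *: y.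
    by rewrite scalerDl; rewrite addrACA.
  rewrite /dirp in h; lra.
- move=> k x k0; rewrite /dirp -inf_scale //; last 2 first.
  + exact: dset0.
  + exact: dset_lb.
  congr inf; apply/seteqP; split.
  + move=> _ [t /= t0 <-]; exists (p (x + (t / k) *: y) - (t / k) * p y).
      by exists (t / k) => //=; rewrite divr_ge0 // ltW.
    rewrite mulrBr -(sp.2 k _ k0) scalerDr scalerA mulrCA divff ?gt_eqF // mulr1.
    by rewrite mulrA mulrCA divff ?gt_eqF // mulr1.
  + move=> _ [_ [t /= t0 <-] <-]; exists (k * t) => /=; first by rewrite mulr_ge0 // ltW.
    by rewrite mulrBr -(sp.2 k _ k0) scalerDr scalerA mulrA.

Qed.

End Dir.

Definition lin (f : E -> R) := forall (a : R) x y, f (a *: x + y) = a * f x + f y.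

Lemma minimal_sublin (p : E -> R) : sublin p ->
  exists f, lin f /\ forall x, f x <= p x.
Proof.
move=> sp.
pose T := {q : E -> R | sublin q /\ forall x, q x <= p x}.
pose Rel (s t : T) := `[< forall x, sval t x <= sval s x >].
have t0 : T by exists p; split => //.
have [t tmax] : exists t, premaximal Rel t.
  apply: (@ZL_preorder T t0 Rel).
  - by move=> t; apply/asboolP.
  - move=> r s t /asboolP h1 /asboolP h2; apply/asboolP => x.
    exact: le_trans (h2 x) (h1 x).
  - move=> A Atot.
    have [[s0 As0]|A0] := pselect (A !=set0); last first.
      by exists t0 => s As; exfalso; apply: A0; exists s.
    set qA := fun x => inf [set sval s x | s in A].
    have S0 x : [set sval s x | s in A] !=set0 by exists (sval s0 x); exists s0.
    have Slb x : has_lbound [set sval s x | s in A].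
      exists (- p (- x)) => _ [s As <-].
      have [[ss sp'] sle] := (svalP s).
      apply: le_trans (sublin_lb (conj ss sp') x).
      by rewrite lerN2; apply: sle.
    have inf_le x s : A s -> qA x <= sval s x.
      by move=> As; apply: ge_inf (Slb x) _ _; exists s.
    have sqA : sublin qA.
      split.
      - move=> x y; rewrite /qA -inf_sumE; last 2 first.
        + by split.
        + by split.
        apply: lb_le_inf.
          by case: (S0 x) => a1 h1; case: (S0 y) => a2 h2; exists (a1 + a2); exists a1 => //; exists a2.
        move=> _ [_ [s As <-] [_ [s' As' <-] <-]].
        have [/asboolP h|/asboolP h] := Atot _ _ As As'.
        + apply: le_trans (inf_le (x + y) s' As') _.
          apply: le_trans ((svalP s').1.1 x y) _.
          by rewrite lerD2r; apply: h.
        + apply: le_trans (inf_le (x + y) s As) _.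
          apply: le_trans ((svalP s).1.1 x y) _.
          by rewrite lerD2l; apply: h.
      - move=> k x k0; rewrite /qA -inf_scale //.
        congr inf; apply/seteqP; split.
        + move=> _ [s As <-]; exists (sval s x) => //; first by exists s.
          by rewrite (svalP s).1.2.
        + move=> _ [_ [s As <-] <-]; exists s => //.
          by rewrite (svalP s).1.2.
    have qAp : forall x, qA x <= p x.
      by move=> x; apply: le_trans (inf_le x s0 As0) _; apply: (svalP s0).2.
    exists (exist _ qA (conj sqA qAp)) => s As; apply/asboolP => x /=.
    exact: inf_le.
set f := sval t.
have key : forall g, sublin g -> (forall x, g x <= f x) -> forall x, g x = f x.
  move=> g sg gle.
  have gp : forall x, g x <= p x by move=> x; apply: le_trans (gle x) _; apply: (svalP t).2.
  have /tmax /asboolP h : Rel t (exist _ g (conj sg gp)) by apply/asboolP.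
  by move=> x; apply/eqP; rewrite eq_le gle h.
have sf : sublin f := (svalP t).1.
have fN : forall y, f (- y) = - f y.
  move=> y; have := key _ (dirp_sublin y sf) (dirp_le y sf) (- y).
  move=> e; apply/eqP; rewrite eq_le; apply/andP; split.
  + by rewrite -e; apply: dirp_opp.
  + by have := sublin_lb sf y; lra.
have fD : forall x y, f (x + y) = f x + f y.
  move=> x y; apply/eqP; rewrite eq_le sf.1 /=.
  have := sf.1 (- x) (- y); rewrite -opprD !fN; lra.
have fZ : forall (a : R) x, f (a *: x) = a * f x.
  move=> a x; have [a0|a0] := leP 0 a; first exact: sublin_hom.
  have -> : a *: x = - ((- a) *: x) by rewrite scaleNr opprK.
  by rewrite fN sublin_hom // ?mulNr ?opprK // oppr_ge0 ltW.
exists f; split; last by move=> x; apply: (svalP t).2.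
by move=> a x y; rewrite fD fZ.
Qed.

Lemma hahn_banach (p : E -> R) (v : E) : sublin p ->
  exists f, lin f /\ (forall x, f x <= p x) /\ p v <= f v.
Proof.
move=> sp.
have [f [lf fle]] := minimal_sublin (dirp_sublin v sp).
exists f; split => //; split.
  by move=> x; apply: le_trans (fle x) (dirp_le v sp x).
have h := le_trans (fle (- v)) (dirp_opp v sp).
have f0 : f 0 = 0.
  by have := lf 1 0 0; rewrite scaler0 addr0 mul1r; lra.
have fN : f (- v) = - f v.
  by have := lf (-1) v 0; rewrite addr0 scaleN1r mulN1r f0 addr0.
rewrite fN in h; lra.
Qed.


Section LinFacts.
Variable f : E -> R.
Hypothesis lf : lin f.
Lemma lin0 : f 0 = 0.
Proof. by have := lf 1 0 0; rewrite scaler0 addr0 mul1r; lra. Qed.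
Lemma linD x y : f (x + y) = f x + f y.
Proof. by have := lf 1 x y; rewrite scale1r mul1r. Qed.
Lemma linZ (a : R) x : f (a *: x) = a * f x.
Proof. by have := lf a x 0; rewrite !addr0 lin0 addr0. Qed.
Lemma linN x : f (- x) = - f x.
Proof. by rewrite -scaleN1r linZ mulN1r. Qed.
Lemma linB x y : f (x - y) = f x - f y.
Proof. by rewrite linD linN. Qed.
End LinFacts.

Definition cvx (A : set E) := forall x y (t : R), A x -> A y -> 0 < t < 1 ->
  A (t *: x + (1 - t) *: y).

Lemma comboD (t : R) (x y x' y' : E) :
  t *: (x + y) + (1 - t) *: (x' + y') = (t *: x + (1 - t) *: x') + (t *: y + (1 - t) *: y').
Proof. by rewrite !scalerDr addrACA. Qed.

Lemma comboN (t : R) (x x' : E) :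
  t *: (- x) + (1 - t) *: (- x') = - (t *: x + (1 - t) *: x').
Proof. by rewrite !scalerN opprD. Qed.

Lemma combo_id (t : R) (x : E) : t *: x + (1 - t) *: x = x.
Proof. by rewrite -scalerDl addrC subrK scale1r. Qed.

Lemma separation (A B : set E) (a0 b0 : E) :
  cvx A -> cvx B ->
  (forall d, exists2 del : R, 0 < del & forall t, 0 <= t <= del -> A (a0 + t *: d)) ->
  B b0 -> (forall x, A x -> ~ B x) ->
  exists f, lin f /\ (forall a b, A a -> B b -> f a <= f b) /\
    exists2 a1, A a1 & f a0 < f a1.
Proof.
move=> cA cB coreA Bb0 AB.
set v := b0 - a0.
pose C := [set x | exists a b, [/\ A a, B b & x = a - b + v]].
have cC : cvx C.
  move=> _ _ t [a [b [Aa Bb ->]]] [a' [b' [Aa' Bb' ->]]] t01.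
  exists (t *: a + (1 - t) *: a'), (t *: b + (1 - t) *: b'); split.
  - exact: cA.
  - exact: cB.
  - by rewrite comboD comboD comboN combo_id.
have absC : forall d, exists2 del : R, 0 < del & forall t, 0 <= t <= del -> C (t *: d).
  move=> d; have [del del0 hd] := coreA d; exists del => // t ht.
  exists (a0 + t *: d), b0; split => //; first exact: hd.
  by rewrite /v addrA subrK addrC addKr.
have C0 : C 0.
  have [del del0 hd] := absC 0; have := hd 0; rewrite scale0r; apply.
  by rewrite lexx /= ltW.
have Cv : ~ C v.
  move=> [a [b [Aa Bb /eqP]]]; rewrite eq_sym -subr_eq0 addrK subr_eq0 => /eqP eab.
  by apply: (AB a) => //; rewrite eab.
pose S x := [set s : R | 0 < s /\ C (s^-1 *: x)].
pose mk x := inf (S x).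
have S0 x : S x !=set0.
  have [del del0 hd] := absC x; exists del^-1; split; first by rewrite invr_gt0.
  by rewrite invrK; apply: hd; rewrite lexx ltW.
have Slb x : has_lbound (S x) by exists 0 => s [/ltW].
have mk_ge0 x : 0 <= mk x by apply: lb_le_inf => // s [/ltW].
have up x s s' : 0 < s -> s <= s' -> C (s^-1 *: x) -> C (s'^-1 *: x).
  move=> s0 ss' Cs; have [e|ne] := eqVneq s s'; first by rewrite -e.
  have s'0 : 0 < s' by apply: lt_le_trans ss'.
  have := cC _ _ (s / s') Cs C0.
  rewrite scaler0 addr0 scalerA mulrAC divff ?gt_eqF // mul1r; apply.
  rewrite divr_gt0 //= ltr_pdivrMr // mul1r lt_neqAle ne ss' //.
have mk_lt x s : 0 < s -> mk x < s -> C (s^-1 *: x).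
  move=> s0 /(inf_lt (S0 x)) [s1 [s10 Cs1] s1s].
  exact: up _ _ _ s10 (ltW s1s) Cs1.
have mk_le1 x : C x -> mk x <= 1.
  by move=> Cx; apply: ge_inf (Slb x) _ _; split; rewrite ?ltr01 // invr1 scale1r.
have mk_v : 1 <= mk v.
  by rewrite leNgt; apply/negP => /(mk_lt v 1 ltr01); rewrite invr1 scale1r.
have smk : sublin mk.
  split.
  - move=> x y; apply/ler_addgt0Pr => e e0.
    set s := mk x + e / 2; set t := mk y + e / 2.
    have s0 : 0 < s by rewrite /s; have := mk_ge0 x; lra.
    have t0 : 0 < t by rewrite /t; have := mk_ge0 y; lra.
    have Cx : C (s^-1 *: x) by apply: mk_lt => //; rewrite /s; lra.
    have Cy : C (t^-1 *: y) by apply: mk_lt => //; rewrite /t; lra.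
    have st0 : 0 < s + t by lra.
    have : C ((s + t)^-1 *: (x + y)).
      have := cC _ _ (s / (s + t)) Cx Cy.
      have -> : s / (s + t) *: (s^-1 *: x) + (1 - s / (s + t)) *: (t^-1 *: y) =
                (s + t)^-1 *: (x + y).
        rewrite !scalerA scalerDr; congr (_ *: _ + _ *: _).
          by field; rewrite !gt_eqF.
        by field; rewrite !gt_eqF.
      apply; rewrite divr_gt0 //= ltr_pdivrMr // mul1r; lra.
    move=> Cxy; have : mk (x + y) <= s + t by apply: ge_inf (Slb _) _ _; split.
    by rewrite /s /t; lra.
  - move=> k x k0; rewrite /mk -inf_scale //; congr inf; apply/seteqP; split.
    + move=> s [s0 Cs]; exists (s / k).
        split; first by rewrite divr_gt0.
        by rewrite invf_div scalerA mulrC in Cs *.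
      by rewrite mulrCA divff ?gt_eqF // mulr1.
    + move=> _ [s [s0 Cs] <-]; split; first by rewrite mulr_gt0.
      rewrite scalerA; suff -> : (k * s)^-1 * k = s^-1 by [].
      by field; rewrite !gt_eqF.
have [f [lf [fle fv]]] := hahn_banach v smk.
exists f; split => //; split.
  move=> a b Aa Bb.
  have : C (a - b + v) by exists a, b.
  move/mk_le1 => h; have := fle (a - b + v).
  rewrite (linD lf) (linB lf); lra.
have [del del0 hd] := coreA v.
exists (a0 + del *: v); first by apply: hd; rewrite lexx ltW.
rewrite (linD lf) (linZ lf); have : 0 < del * f v by rewrite mulr_gt0 //; lra.
lra.
Qed.

End HahnBanach.

Section Main.
Context (R : realType) (X : tvsType R).
Local Notation D := (dual X).
Local Notation ZZ := (Z X).
Local Notation E := (X * (X -> R) * R)%type.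

Lemma dlin (f : D) : lin (dual_fun f).
Proof. exact: dual_linear. Qed.

Lemma dualD (f : D) x y : f (x + y) = f x + f y.
Proof. exact: (linD (dlin f)). Qed.
Lemma dualN (f : D) x : f (- x) = - f x.
Proof. exact: (linN (dlin f)). Qed.
Lemma dualZ (f : D) (k : R) x : f (k *: x) = k * f x.
Proof. exact: (linZ (dlin f)). Qed.

Lemma dcomb_lin (a : R) (f : D) (b : R) (g : D) :
  forall (c : R) (x y : X), (fun x => a * f x + b * g x) (c *: x + y) =
    c * (fun x => a * f x + b * g x) x + (fun x => a * f x + b * g x) y.
Proof. by move=> c x y /=; rewrite !(linD (dlin _)) !(linZ (dlin _)); ring. Qed.

Lemma dcomb_cont (a : R) (f : D) (b : R) (g : D) :
  continuous (fun x => a * f x + b * g x).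
Proof.
move=> x; apply: (@cvgD _ R^o); apply: cvgMl_tmp; exact: dual_cont.
Qed.

Definition dcomb (a : R) (f : D) (b : R) (g : D) : D :=
  @Dual R X _ (@dcomb_lin a f b g) (@dcomb_cont a f b g).

Lemma dcombE a f b g x : dcomb a f b g x = a * f x + b * g x.
Proof. by []. Qed.

Lemma dzero_lin : forall (c : R) (x y : X), (fun _ : X => (0 : R)) (c *: x + y) =
    c * (fun _ : X => (0 : R)) x + (fun _ : X => (0 : R)) y.
Proof. by move=> *; rewrite mulr0 addr0. Qed.

Lemma dzero_cont : continuous (fun _ : X => (0 : R)).
Proof. by move=> x; apply: cvg_cst. Qed.

Definition dzero : D := @Dual R X _ dzero_lin dzero_cont.

Definition pv (z u : ZZ) : R := z.2 u.1 + u.2 z.1 - u.2 u.1.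

Lemma phi_ub (S : set ZZ) z u : S u -> ((pv z u)%:E <= phiT S z)%E.
Proof. by move=> Su; apply: ereal_sup_ubound; exists u. Qed.

Lemma phi_le (S : set ZZ) z (r : \bar R) :
  (forall u, S u -> ((pv z u)%:E <= r)%E) -> (phiT S z <= r)%E.
Proof. by move=> h; apply: ge_ereal_sup => _ [u Su <-]; apply: h. Qed.

Lemma pv_diag z : pv z z = coupling z.
Proof. by rewrite /pv /coupling; ring. Qed.

Lemma pv_c z u : coupling z - pv z u = z.2 (z.1 - u.1) - u.2 (z.1 - u.1).
Proof. by rewrite /pv /coupling !(linB (dlin _)); ring. Qed.

Lemma restrT (T : set ZZ) : restr T setT = T.
Proof. by apply/seteqP; split => [z []|z Tz]. Qed.

Lemma phi_c_mono (S : set ZZ) z :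
  (phiT S z <= (coupling z)%:E)%E <->
  forall u, S u -> 0 <= z.2 (z.1 - u.1) - u.2 (z.1 - u.1).
Proof.
split.
- move=> h u Su; have := le_trans (phi_ub z Su) h; rewrite lee_fin -subr_ge0 pv_c //.
- move=> h; apply: phi_le => u Su; rewrite lee_fin -subr_ge0 pv_c; exact: h.
Qed.

Lemma ident_NI (V : set X) (T : set ZZ) : identifies V T -> V_NI V T.
Proof.
move=> idT z Vz; rewrite leNgt; apply/negP => lt.
have Tz : T z by apply: idT => //; exact: ltW.
have := phi_ub z (conj Tz Vz : restr T V z); rewrite pv_diag => h.
by move: (le_lt_trans h lt); rewrite ltxx.
Qed.

Lemma fitz_repr (T : set ZZ) : in_MX T -> identifies setT T -> representable T.
Proof.
move=> [monoT [z0 Tz0]] idT.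
have idT' : forall z, (phiT T z <= (coupling z)%:E)%E -> T z.
  by move=> z; rewrite -{1}(restrT T); apply: idT.
have ge : forall z, ((coupling z)%:E <= phiT T z)%E.
  by move=> z; have := ident_NI idT (z := z) I; rewrite restrT.
have onT : forall z, T z -> phiT T z = (coupling z)%:E.
  move=> z Tz; apply/eqP; rewrite eq_le ge andbT.
  by apply/phi_c_mono => u Tu; apply: monoT.
exists (phiT T); split => //.
- split; first by move=> z; apply/negP => /eqP e; have := ge z; rewrite e leeNy_eq.
  by exists z0; rewrite onT.
- move=> z1 z2 z t /andP[t0 t1] e1 e2.
  have ninf : forall w, phiT T w != -oo%E.
    by move=> w; apply/negP => /eqP e; have := ge w; rewrite e leeNy_eq.
  apply: phi_le => u Tu.
  have -> : pv z u = t * pv z1 u + (1 - t) * pv z2 u.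
    rewrite /pv e1 e2 (linD (dlin _)) !(linZ (dlin _)); ring.
  rewrite EFinD !EFinM; apply: leeD; apply: lee_wpmul2l;
    [rewrite lee_fin ltW // | exact: phi_ub | rewrite lee_fin subr_ge0 ltW // | exact: phi_ub].
- move=> r z /= hz.
  have : (r%:E < phiT T z)%E by rewrite ltNge; apply/negP.
  move/ereal_sup_gt => [_ [u Tu <-]]; rewrite lte_fin => ru.
  set eps := (pv z u - r) / 2.
  have eps0 : 0 < eps by rewrite /eps divr_gt0 // subr_gt0.
  exists [set y | `|u.2 y - u.2 z.1| < eps]; split.
    have := @dual_cont _ _ u.2 z.1; move/cvgrPdist_lt => /(_ eps eps0).
    by apply: filterS => y /=; rewrite distrC.
  exists [:: u.1], eps => // y y' /= hy hy'.
  have := hy' u.1; rewrite mem_seq1 eqxx => /(_ isT) hy'1.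
  move=> le; have := le_trans (phi_ub (y, y') Tu) le; rewrite lee_fin /pv /=.
  move: hy hy'1; rewrite /pv /eps in ru *.
  move=> /ltr_distlCBl h1 /ltr_distlCBl h2; rewrite /pv in h1 h2; lra.
- apply/seteqP; split => z /=.
  + by move=> e; apply: idT'; rewrite e.
  + exact: onT.
Qed.


Lemma repr_mono (T : set ZZ) : representable T -> monotone_op T.
Proof.
move=> [h [_ ch _ hc eT]] z w Tz Tw.
have hz : h z = (coupling z)%:E by rewrite -eT in Tz.
have hw : h w = (coupling w)%:E by rewrite -eT in Tw.
set t : R := 2^-1.
have t01 : 0 < t < 1 by rewrite /t; apply/andP; split; lra.
pose m : ZZ := (t *: z.1 + (1 - t) *: w.1, dcomb t z.2 (1 - t) w.2).
have := ch z w m t t01 erefl (fun u => erefl).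
rewrite hz hw -!EFinM -EFinD => hm.
have := le_trans (hc m) hm; rewrite lee_fin /coupling /m /=.
rewrite !(linD (dlin _)) !(linZ (dlin _)) !(linN (dlin _)) /t => hh; lra.
Qed.

Lemma NI_ne (T : set ZZ) : V_NI setT T -> T !=set0.
Proof.
move=> NI; have [//|T0] := pselect (T !=set0).
have := NI ((0%R : X), dzero) I.
have : (phiT (restr T setT) ((0%R : X), dzero) <= (coupling ((0%R : X), dzero) - 1)%:E)%E.
  by apply: phi_le => u [Tu _]; exfalso; apply: T0; exists u.
move=> h1 h2; have := le_trans h2 h1; rewrite lee_fin; lra.
Qed.

Definition inj1 (y : X) : E := ((y, (0 : X -> R)), 0).
Definition inj2 (g : X -> R) : E := ((0, g), 0).
Definition inj3 : E := ((0, (0 : X -> R)), 1).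
Lemma decompE y g r : ((y, g), r) = inj1 y + inj2 g + r *: inj3 :> E.
Proof.
rewrite /inj1 /inj2 /inj3; congr (_, _); first congr (_, _).
- by rewrite /= scaler0 !addr0.
- by apply/funext => x /=; rewrite scaler0 add0r addr0.
- by rewrite /= !add0r; rewrite -[LHS]mulr1.
Qed.
Lemma inj1_lin (c : R) y1 y2 : inj1 (c *: y1 + y2) = c *: inj1 y1 + inj1 y2.
Proof.
rewrite /inj1; congr (_, _); first congr (_, _) => //=.
- by apply/funext => x /=; rewrite scaler0 add0r.
- by rewrite /= scaler0 add0r.
Qed.
Lemma inj2_lin (c : R) g1 g2 : inj2 (c *: g1 + g2) = c *: inj2 g1 + inj2 g2.
Proof.
rewrite /inj2; congr (_, _); first congr (_, _) => //=.
- by rewrite scaler0 add0r.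
- by rewrite /= scaler0 add0r.
Qed.

Lemma sum_delta (l : seq X) (F : X -> R) x : uniq l -> x \in l ->
  \sum_(u <- l) F u * (x == u)%:R = F x.
Proof.
move=> ul xl; rewrite (big_rem x) //= eqxx mulr1 big_seq_cond big1 ?addr0 //.
move=> u /andP[ur _]; rewrite (mem_rem_uniq _ ul) in ur.
by case/andP: ur => /negbTE ux _; rewrite eq_sym ux mulr0.
Qed.

Lemma dual_sum (y' : D) (l : seq X) (b : X -> R) :
  y' (\sum_(u <- l) b u *: u) = \sum_(u <- l) b u * y' u.
Proof.
elim: l => [|a l IH]; first by rewrite !big_nil (lin0 (dlin _)).
by rewrite !big_cons (linD (dlin _)) (linZ (dlin _)) IH.
Qed.

Lemma lin_fsum (L : (X -> R) -> R) (lL : lin L) (l : seq X) (c : X -> R) :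
  L (fun x => \sum_(u <- l) c u * (x == u)%:R) =
  \sum_(u <- l) c u * L (fun x => (x == u)%:R).
Proof.
elim: l => [|a l IH].
  have -> : (fun x => \sum_(u <- [::]) c u * (x == u)%:R) = 0.
    by apply/funext => x; rewrite big_nil.
  by rewrite big_nil (lin0 lL).
have -> : (fun x => \sum_(u <- a :: l) c u * (x == u)%:R) =
  c a *: ((fun x => (x == a)%:R) : X -> R) +
  ((fun x => \sum_(u <- l) c u * (x == u)%:R) : X -> R).
  by apply/funext => x; rewrite big_cons.
by rewrite lL IH big_cons.
Qed.

Lemma conv_abs (t a b e : R) : 0 < t < 1 -> `|a| < e -> `|b| < e ->
  `|t * a + (1 - t) * b| < e.
Proof.
move=> /andP[t0 t1] ha hb; apply: le_lt_trans (ler_normD _ _) _.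
have t'0 : 0 < 1 - t by rewrite subr_gt0.
rewrite !normrM (ger0_norm (ltW t0)) (ger0_norm (ltW t'0)).
have h1 : t * `|a| < t * e by rewrite ltr_pM2l.
have h2 : (1 - t) * `|b| < (1 - t) * e by rewrite ltr_pM2l.
have h3 : (1 - t) * e = e - t * e by ring.
lra.
Qed.

Lemma conv_lt (t a b c : R) : 0 < t < 1 -> a < c -> b < c -> t * a + (1 - t) * b < c.
Proof.
move=> /andP[t0 t1] ha hb.
have h1 : t * a < t * c by rewrite ltr_pM2l.
have h2 : (1 - t) * b < (1 - t) * c by rewrite ltr_pM2l // subr_gt0.
have h3 : (1 - t) * c = c - t * c by ring.
lra.
Qed.

Lemma sum_abs_ge (s : seq X) (g : X -> R) u : u \in s -> `|g u| <= \sum_(v <- s) `|g v|.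
Proof.
move=> us; rewrite (big_rem u) //= lerDl; apply: sumr_ge0 => *; exact: normr_ge0.
Qed.

Lemma aff_nbhs (x0 p : X) (k : R) (U : set X) :
  nbhs x0 U -> nbhs p [set y | U (x0 + k *: (y - p))].
Proof.
move=> U0.
have : (fun y => x0 + k *: (y - p)) @ p --> x0 + k *: (p - p).
  apply: (@continuous2_cvg _ _ _ _ _ _ (fun _ => x0) (fun y => k *: (y - p)) (fun a b => a + b)).
  - exact: (@add_continuous X (x0, k *: (p - p))).
  - exact: cvg_cst.
  apply: (@continuous2_cvg _ _ _ _ _ _ (fun _ => k) (fun y => y - p) (fun (a : R^o) (b : X) => a *: b)).
  - exact: (@scale_continuous _ X (k, p - p)).
  - exact: cvg_cst.
  apply: (@continuous2_cvg _ _ _ _ _ _ id (fun _ => p) (fun (a : X) (b : X) => a - b)).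
  - exact: (@sub_continuous X (p, p)).
  - exact: cvg_id.
  - exact: cvg_cst.
by rewrite subrr scaler0 addr0 => /(_ U U0).
Qed.

Lemma core_nbhs (x0 d : X) (U : set X) : nbhs x0 U ->
  exists2 del : R, 0 < del & forall t, 0 <= t <= del -> U (x0 + t *: d).
Proof.
move=> U0.
have : (fun t : R^o => x0 + t *: d) @ (0 : R^o) --> x0 + (0 : R^o) *: d.
  apply: (@continuous2_cvg _ _ _ _ _ _ (fun _ => x0) (fun t : R^o => t *: d) (fun a b => a + b)).
  - exact: (@add_continuous X (x0, 0 *: d)).
  - exact: cvg_cst.
  apply: (@continuous2_cvg _ _ _ _ _ _ id (fun _ => d) (fun (a : R^o) (b : X) => a *: b)).
  - exact: (@scale_continuous _ X (0, d)).
  - exact: cvg_id.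
  - exact: cvg_cst.
rewrite scale0r addr0 => /(_ U U0) /= /nbhs_ballP [e /= e0 he].
exists (e / 2); first by rewrite divr_gt0.
move=> t /andP[t0 te]; apply: he; rewrite /ball /= sub0r normrN ger0_norm //.
by apply: le_lt_trans te _; rewrite ltr_pdivrMr // ltr_pMr // ltr1n.
Qed.

Lemma ident_main (T : set ZZ) (V : set X) :
  representable T -> alg_open V -> V_NI V T -> identifies V T.
Proof.
move=> [h [[hninf [zp hzp]] ch lh hc eT]] aoV NI [x0 x0s] /= Vx0 hphi.
rewrite -eT /=; apply/eqP; rewrite eq_le hc andbT.
rewrite leNgt; apply/negP => hlt.
set c0 := coupling (x0, x0s) in hlt *.
have [beta [cb hb]] : exists beta : R, c0 < beta /\ (beta%:E < h (x0, x0s))%E.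
  move: hlt; case: (h (x0, x0s)) => [hr| |] //.
  - rewrite lte_fin => lt; exists ((c0 + hr) / 2); split; [lra | rewrite lte_fin; lra].
  - by move=> _; exists (c0 + 1); split; [lra | rewrite ltry].
have hnot : ~ (h (x0, x0s) <= beta%:E)%E.
  by move=> hle; move: (lt_le_trans hb hle); rewrite ltxx.
have [N [Nx0 [s [e e0 hN]]]] := lh beta (x0, x0s) hnot.
have [BB BBc BBb] := @locally_convex R X.
have [U [[BBU Ux0] UN]] : exists U, (BB U /\ U x0) /\ U `<=` N.
  by have [U hU UN] := BBb.2 x0 N Nx0; exists U.
have nbU : nbhs x0 U by apply: open_nbhs_nbhs; split => //; exact: BBb.1.
have cU : forall y1 y2 (t : R), U y1 -> U y2 -> 0 <= t <= 1 -> U (t *: y1 + (1 - t) *: y2).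
  move=> y1 y2 t U1 U2 /andP[t0 t1].
  have := BBc U (mem_set BBU) y1 y2 (Itv01 t0 t1) (mem_set U1) (mem_set U2).
  by rewrite inE.
pose A : set (X * (X -> R) * R)%type :=
  [set a | [/\ U a.1.1, (forall u, u \in s -> `|a.1.2 u - x0s u| < e) & a.2 < beta]].
pose B : set (X * (X -> R) * R)%type :=
  [set b | exists y' : D, b.1.2 = dual_fun y' /\ (h (b.1.1, y') <= b.2%:E)%E].
pose a0 : (X * (X -> R) * R)%type := ((x0, dual_fun x0s), c0).
have cvA : cvx A.
  move=> [[y1 g1] r1] [[y2 g2] r2] t [U1 s1 r1b] [U2 s2 r2b] t01; split => /=.
  - by apply: cU => //; case/andP: t01 => *; apply/andP; split; apply: ltW.
  - move=> u us.
    have -> : t * g1 u + (1 - t) * g2 u - x0s u =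
              t * (g1 u - x0s u) + (1 - t) * (g2 u - x0s u) by ring.
    by apply: conv_abs => //; [apply: s1 | apply: s2].
  - exact: conv_lt.
have cvB : cvx B.
  move=> [[y1 g1] r1] [[y2 g2] r2] t [y1' [/= e1 h1]] [y2' [/= e2 h2]] t01.
  exists (dcomb t y1' (1 - t) y2'); split => /=.
    by apply/funext => x /=; rewrite e1 e2.
  have := ch (y1, y1') (y2, y2') (t *: y1 + (1 - t) *: y2, dcomb t y1' (1 - t) y2') t t01
    erefl (fun u => erefl).
  move=> hle; apply: le_trans hle _.
  case/andP: t01 => t0 t1.
  have -> : t *: r1 + (1 - t) *: r2 = t * r1 + (1 - t) * r2 by [].
  rewrite (@EFinD _ (t * r1) ((1 - t) * r2)) (@EFinM _ t r1) (@EFinM _ (1 - t) r2).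
  apply: leeD; apply: lee_wpmul2l => //; by rewrite lee_fin ?subr_ge0 ltW.
have coreA : forall d, exists2 del : R, 0 < del &
    forall t, 0 <= t <= del -> A (a0 + t *: d).
  move=> [[dy dg] dr].
  have [d1 d10 hd1] := core_nbhs dy nbU.
  set Mg := \sum_(v <- s) `|dg v|.
  have Mg0 : 0 <= Mg by apply: sumr_ge0 => *; exact: normr_ge0.
  set d2 := e / (1 + Mg).
  have d20 : 0 < d2 by apply: divr_gt0 => //; lra.
  set d3 := (beta - c0) / (1 + `|dr|).
  have d30 : 0 < d3 by apply: divr_gt0; [lra | have := normr_ge0 dr; lra].
  exists (Order.min d1 (Order.min d2 d3)); first by rewrite !lt_min d10 d20 d30.
  move=> t /andP[t0]; rewrite !le_min => /andP[td1 /andP[td2 td3]]; split => /=.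
  - by apply: hd1; rewrite t0 td1.
  - move=> u us; rewrite addrAC subrr add0r normrM ger0_norm //.
    have hu := sum_abs_ge dg us.
    apply: le_lt_trans (ler_wpM2r (normr_ge0 _) td2) _.
    apply: le_lt_trans (ler_wpM2l (ltW d20) hu) _.
    rewrite /d2 mulrAC ltr_pdivrMr; last by lra.
    rewrite ltr_pM2l // -/Mg; lra.
  - have -> : c0 + t *: dr = c0 + t * dr by [].
    have : t * dr <= d3 * `|dr|.
      apply: le_trans (ler_norm _) _; rewrite normrM ger0_norm //.
      by apply: ler_wpM2r => //; exact: normr_ge0.
    have : d3 * `|dr| < beta - c0.
      rewrite /d3 mulrAC ltr_pdivrMr; last by have := normr_ge0 dr; lra.
      by rewrite ltr_pM2l; [lra | lra].
    lra.
have Bb0 : B ((zp.1, dual_fun zp.2), fine (h zp)).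
  by exists zp.2; split => //=; rewrite fineK //; case: (zp).
have AB : forall x, A x -> ~ B x.
  move=> [[y g] r] [/= Uy hs hr] [y' [/= eg hle]].
  apply: (hN y y' (UN _ Uy)).
    by move=> u us; rewrite -eg; apply: hs.
  by apply: le_trans hle _; rewrite lee_fin ltW.
have [f [lf [fAB [a1 Aa1 fa1]]]] := separation cvA cvB coreA Bb0 AB.
pose L1 := fun y => f (inj1 y).
pose L2 := fun g => f (inj2 g).
pose lam := f inj3.
have fE : forall y g r, f ((y, g), r) = L1 y + L2 g + r * lam.
  by move=> y g r; rewrite decompE (linD lf) (linD lf) (linZ lf).
have L1lin : lin L1 by move=> c y1 y2; rewrite /L1 inj1_lin (linD lf) (linZ lf).
have L2lin : lin L2 by move=> c g1 g2; rewrite /L2 inj2_lin (linD lf) (linZ lf).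
pose M := f ((zp.1, dual_fun zp.2), fine (h zp)).
have fM : forall a, A a -> f a <= M by move=> a Aa; exact: fAB.
have L1b : forall y, U y -> L1 y <= M - L2 (dual_fun x0s) - c0 * lam.
  move=> y Uy; have := fM ((y, dual_fun x0s), c0).
  rewrite fE => hh; suff : L1 y + L2 (dual_fun x0s) + c0 * lam <= M by lra.
  by apply: hh; split => //= u _; rewrite subrr normr0.
have L1cont : continuous L1.
  move=> p; apply/cvgrPdist_lt => eps eps0.
  set Mx := M - L2 (dual_fun x0s) - c0 * lam.
  set K := Mx - L1 x0 + 1.
  have K0 : 0 < K by have := L1b x0 Ux0; rewrite /K /Mx; lra.
  set k := 2 * K / eps.
  have k0 : 0 < k by rewrite /k divr_gt0 // mulr_gt0.
  have n1 := aff_nbhs p k nbU.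
  have n2 := aff_nbhs p (- k) nbU.
  apply: filterS (filterI n1 n2) => y [/= h1 h2].
  have := L1b _ h1; have := L1b _ h2.
  rewrite !(linD L1lin) !(linZ L1lin) !(linB L1lin) -/Mx => u1 u2.
  have hk : k * `|L1 p - L1 y| <= K - 1.
    rewrite -{1}(ger0_norm (ltW k0)) -normrM ler_norml; apply/andP; split; rewrite /K; lra.
  rewrite -(ltr_pM2l k0); have -> : k * eps = 2 * K by rewrite /k; field; rewrite gt_eqF.
  lra.
pose w1s : D := @Dual R X L1 L1lin L1cont.
have L2b : forall g, (forall u, u \in s -> `|g u - x0s u| < e) ->
    L2 g <= M - L1 x0 - c0 * lam.
  move=> g hg; have := fM ((x0, g), c0); rewrite fE => hh.
  suff : L1 x0 + L2 g + c0 * lam <= M by lra.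
  by apply: hh; split.
have L2van : forall g, (forall u, u \in s -> g u = 0) -> L2 g = 0.
  move=> g hg.
  have hk : forall k : R, k * L2 g + L2 (dual_fun x0s) <= M - L1 x0 - c0 * lam.
    move=> k; rewrite -L2lin; apply: L2b => u us /=.
    have -> : (k *: g + dual_fun x0s) u = k * g u + x0s u by [].
    by rewrite hg // mulr0 add0r subrr normr0.
  apply/eqP; apply/negP => /negP q0.
  set q := L2 g in q0 hk.
  have := hk ((`|M - L1 x0 - c0 * lam - L2 (dual_fun x0s)| + 1) / q).
  rewrite -mulrA mulVf // mulr1 => hh.
  have := ler_norm (M - L1 x0 - c0 * lam - L2 (dual_fun x0s)); lra.
pose w1 := \sum_(u <- undup s) L2 (fun x => (x == u)%:R) *: u.
have L2rep : forall y' : D, L2 (dual_fun y') = y' w1.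
  move=> y'.
  pose g1 := fun x => \sum_(u <- undup s) y' u * (x == u)%:R.
  have eg : dual_fun y' = (dual_fun y' - g1) + g1 by rewrite subrK.
  rewrite {1}eg (linD L2lin) L2van; last first.
    move=> x xs; have -> : (dual_fun y' - g1) x = y' x - g1 x by [].
    by rewrite /g1 sum_delta ?undup_uniq ?mem_undup // subrr.
  rewrite add0r /g1 (lin_fsum L2lin) /w1 dual_sum.
  by apply: eq_bigr => u _; rewrite mulrC.
have key : forall u, T u -> f a1 <= L1 u.1 + u.2 w1 + coupling u * lam.
  move=> [u1 u2] Tu; rewrite -L2rep -fE; apply: fAB => //.
  exists u2; split => //=.
  have -> : h (u1, u2) = (coupling (u1, u2))%:E by rewrite -eT in Tu.
  by [].
set kap := f a1 - f a0.
have kap0 : 0 < kap by rewrite /kap subr_gt0.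
have fa0 : f a0 = L1 x0 + x0s w1 + c0 * lam by rewrite /a0 fE L2rep.
pose as_ : D := dcomb 1 w1s lam x0s.
pose a := w1 + lam *: x0.
pose Q := as_ a.
have cV : core V x0 by rewrite -aoV.
have [dV dV0 hdV] := cV (- a).
pose t := Order.min dV (Order.min (1 / (`|lam| + 1)) (kap / (2 * (`|Q| + 1)))).
have lam1 : 0 < `|lam| + 1 by have := normr_ge0 lam; lra.
have Q1 : 0 < 2 * (`|Q| + 1) by have := normr_ge0 Q; lra.
have t0 : 0 < t by rewrite /t !lt_min dV0 !divr_gt0.
have [tdV t1 t2] : [/\ t <= dV, t <= 1 / (`|lam| + 1) & t <= kap / (2 * (`|Q| + 1))].
  by have := lexx t; rewrite {2}/t !le_min => /andP[-> /andP[-> ->]].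
pose zt : ZZ := (x0 - t *: a, dcomb 1 x0s (- t) as_).
have Vzt : V zt.1 by rewrite /zt /= -scalerN; apply: hdV; rewrite ltW.
have hNI := NI zt Vzt.
have hup : (phiT (restr T V) zt <= (coupling zt - t * kap / 2)%:E)%E.
  apply: phi_le => u [Tu Vu]; rewrite lee_fin.
  have hP := (phi_c_mono _ _).1 hphi u (conj Tu Vu).
  have hk := key u Tu.
  pose P := x0s (x0 - u.1) - u.2 (x0 - u.1).
  pose S := as_ (u.1 - x0) + (u.2 a - x0s a).
  have iden : coupling zt - pv zt u = P + t * S + t ^+ 2 * Q.
    rewrite /coupling /pv /zt /P /S /Q /as_ /a /=.
    rewrite ?dualD ?dualN ?dualZ /=.
    rewrite ?dualD ?dualN ?dualZ ?(linD L1lin) ?(linN L1lin) ?(linZ L1lin).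
    rewrite ?(linD L1lin) ?(linN L1lin) ?(linZ L1lin).
    ring.
  have hS : kap - lam * P <= S.
    move: hk; rewrite /kap fa0 /P /S /as_ /a /c0 /coupling /=.
    rewrite ?dualD ?dualN ?dualZ /=.
    rewrite ?dualD ?dualN ?dualZ ?(linD L1lin) ?(linN L1lin) ?(linZ L1lin).
    rewrite ?(linD L1lin) ?(linN L1lin) ?(linZ L1lin).
    move=> hk'; lra.
  have hSt : t * (kap - lam * P) <= t * S by rewrite ler_wpM2l // ltW.
  have h1t : 0 <= 1 - t * lam.
    have : t * lam <= t * `|lam| by apply: ler_wpM2l; [exact: ltW | exact: ler_norm].
    have : t * (`|lam| + 1) <= 1 by rewrite -ler_pdivlMr // mulrC mul1r -[1 / _]mul1r.
    lra.
  have hPt : 0 <= (1 - t * lam) * P by rewrite mulr_ge0.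
  have hQt : - (t * (kap / 2)) <= t ^+ 2 * Q.
    have tq : t * `|Q| <= kap / 2.
      have : t * (2 * (`|Q| + 1)) <= kap by rewrite -ler_pdivlMr // mulrC.
      lra.
    have : t * (t * `|Q|) <= t * (kap / 2) by rewrite ler_wpM2l // ltW.
    have : t ^+ 2 * (- `|Q|) <= t ^+ 2 * Q.
      apply: ler_wpM2l; first by rewrite exprn_ge0 // ltW.
      by have := ler_norm (- Q); rewrite normrN; lra.
    rewrite expr2; lra.
  have := iden; lra.
have := le_trans hNI hup; rewrite lee_fin.
have : 0 < t * kap / 2 by rewrite !mulr_gt0.
lra.
Qed.
End Main.

End Helpers.
Import Helpers.

Theorem theorem3p3 (R : realType) (X : tvsType R)
  (hX : hausdorff_space X) (hnt : exists x : X, x != 0)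
  (T : set (Z X)) (VV : set (set X))
  (hVV : forall V, VV V -> alg_open V) (hXV : VV setT) :
  (in_MX T /\ forall V, VV V -> identifies V T) <->
  (representable T /\ forall V, VV V -> V_NI V T).
Proof.
split.
- move=> [mT idT]; split.
  + exact: fitz_repr mT (idT _ hXV).
  + by move=> V VV_V; apply: ident_NI; apply: idT.
- move=> [rT NI]; split.
  + split; first exact: repr_mono.
    exact: NI_ne (NI _ hXV).
  + by move=> V VV_V; apply: ident_main => //; [apply: hVV | apply: NI].
Qed.
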